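(* Let $g$ be a nonnegative function on $\mathbb{R}^3$ with $$\int_{\mathbb{R}^3} g\,dv=1,\quad \int_{\mathbb{R}^3} g(v)v_i\,dv=0\ (i=1,2,3),\quad\int_{\mathbb{R}^3} g(v)|v|^2\,dv=3.$$ Suppose that $|\hat g(\xi)|\leq K_1e^{-K_2\varphi(|\xi|)}$ for all $\xi\in\mathbb{R}^3$, where $K_1\geq1$, $K_2>0$ and $\varphi:[0,+\infty)\to[0,+\infty)$ satisfies $\lim_{t\to+\infty}\varphi(t)=+\infty$. Then there exists $\eta>0$ such that for every $R>\eta$ there exists $K>0$ (depending on $R$) with $$|\hat g(\xi)|\leq e^{-K|\xi|^2}\ \text{ for }|\xi|<R,\qquad |\hat g(\xi)|\leq e^{-K\varphi(|\xi|)}\ \text{ for }|\xi|\geq R.$$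
   Context: $\hat g(\xi)=\int_{\mathbb{R}^3} g(v)e^{-i\xi\cdot v}dv$. *)

(* Defs.v *)
From HB Require Import structures.
From mathcomp Require Import all_boot all_order all_algebra.
From mathcomp Require Import all_classical all_reals all_analysis.
Set Implicit Arguments. Unset Strict Implicit. Unset Printing Implicit Defensive.
Import Order.TTheory GRing.Theory Num.Theory.
Local Open Scope ring_scope.

Section Defs.
Variable R : realType.

Definition R3 := ((R * R) * R)%type.

Definition leb3 := ((@lebesgue_measure R \x @lebesgue_measure R) \x @lebesgue_measure R)%E.

Definition c1 (v : R3) : R := v.1.1.
Definition c2 (v : R3) : R := v.1.2.
Definition c3 (v : R3) : R := v.2.

Definition dot3 (x y : R3) : R := c1 x * c1 y + c2 x * c2 y + c3 x * c3 y.
Definition sqnorm3 (x : R3) : R := dot3 x x.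
Definition norm3 (x : R3) : R := Num.sqrt (sqnorm3 x).

(* \hat g(xi) = \int g(v) e^{-i xi.v} dv = FRe g xi + i * FIm g xi *)
Definition FRe (g : R3 -> R) (xi : R3) : R :=
  Rintegral leb3 setT (fun v => g v * cos (dot3 xi v)).
Definition FIm (g : R3 -> R) (xi : R3) : R :=
  - Rintegral leb3 setT (fun v => g v * sin (dot3 xi v)).
Definition Fabs (g : R3 -> R) (xi : R3) : R :=
  Num.sqrt (FRe g xi ^+ 2 + FIm g xi ^+ 2).
End Defs.

(* Main.v *)
Require Import Defs.
From HB Require Import structures.
From mathcomp Require Import all_boot all_order all_algebra.
From mathcomp Require Import all_classical all_reals all_analysis.
From mathcomp Require Import measurable_realfun.
From mathcomp Require Import ring lra.
Import Order.TTheory GRing.Theory Num.Theory.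
Import numFieldNormedType.Exports.
Local Open Scope classical_set_scope.
Local Open Scope ring_scope.

Section Aux.
Variable R : realType.
Variable g : R3 R -> R.
Hypothesis mg : measurable_fun setT g.
Hypothesis g0 : forall v, 0 <= g v.
Hypothesis g1 : (\int[@leb3 R]_v (g v)%:E = 1%:E)%E.

Definition bdd (h : R3 R -> R) :=
  measurable_fun setT h /\ exists C : R, forall v, `|h v| <= C.

Lemma gint : (@leb3 R).-integrable setT (EFin \o g).
Proof.
apply/integrableP; split; first exact/measurable_EFinP.
under eq_integral => x _ do rewrite /= ger0_norm//.
by rewrite g1 ltry.
Qed.

Lemma ghint h : bdd h -> (@leb3 R).-integrable setT (EFin \o (fun v => g v * h v)).
Proof.
case=> mh [C hC].
have C0 : 0 <= C := le_trans (normr_ge0 _) (hC ((0,0),0)).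
have := (@le_integrable _ _ _ (@leb3 R) _ measurableT (EFin \o (fun v => g v * h v)) (fun x => C%:E * (EFin \o g) x)%E); apply.
- by apply/measurable_EFinP; exact: measurable_funM.
- move=> x _ /=; rewrite lee_fin !normrM (ger0_norm (g0 x)) (ger0_norm C0).
  by rewrite mulrC ler_wpM2r.
- exact: integrableZl gint.
Qed.

Lemma bddD h1 h2 : bdd h1 -> bdd h2 -> bdd (fun v => h1 v + h2 v).
Proof.
case=> m1 [C1 H1] [m2 [C2 H2]]; split; first exact: measurable_funD.
by exists (C1 + C2) => v; apply: le_trans (ler_normD _ _) (lerD (H1 v) (H2 v)).
Qed.

Lemma bddM h1 h2 : bdd h1 -> bdd h2 -> bdd (fun v => h1 v * h2 v).
Proof.
case=> m1 [C1 H1] [m2 [C2 H2]]; split; first exact: measurable_funM.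
exists (C1 * C2) => v; rewrite normrM; apply: ler_pM => //.
Qed.

Lemma bddC k : bdd (fun _ => k).
Proof. by split; [exact: measurable_cst | exists `|k|]. Qed.

Lemma mdot (xi : R3 R) : measurable_fun setT (fun v => dot3 xi v).
Proof.
have m1 : measurable_fun setT (fun v : R3 R => c1 v).
  exact: measurableT_comp measurable_fst measurable_fst.
have m2 : measurable_fun setT (fun v : R3 R => c2 v).
  exact: measurableT_comp measurable_snd measurable_fst.
have m3 : measurable_fun setT (fun v : R3 R => c3 v) by exact: measurable_snd.
rewrite /dot3; apply: measurable_funD; first apply: measurable_funD.
- by apply: measurable_funM => //; exact: measurable_cst.
- by apply: measurable_funM => //; exact: measurable_cst.
- by apply: measurable_funM => //; exact: measurable_cst.
Qed.

Lemma bdd_cos xi : bdd (fun v => cos (dot3 xi v)).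
Proof.
split; first exact: measurableT_comp (continuous_measurable_fun (@continuous_cos R)) (mdot xi).
by exists 1 => v; rewrite ler_norml cos_le1 cos_geN1.
Qed.

Lemma bdd_sin xi : bdd (fun v => sin (dot3 xi v)).
Proof.
split; first exact: measurableT_comp (continuous_measurable_fun (@continuous_sin R)) (mdot xi).
by exists 1 => v; rewrite ler_norml sin_le1 sin_geN1.
Qed.

Definition L (h : R3 R -> R) := Rintegral (@leb3 R) setT (fun v => g v * h v).

Lemma LD h1 h2 : bdd h1 -> bdd h2 -> L (fun v => h1 v + h2 v) = L h1 + L h2.
Proof.
move=> b1 b2; rewrite /L -RintegralD //; try exact: ghint.
by apply: eq_Rintegral => v _; rewrite mulrDr.
Qed.

Lemma LZ k h : bdd h -> L (fun v => k * h v) = k * L h.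
Proof.
move=> b; rewrite /L -RintegralZl //; last exact: ghint.
by apply: eq_Rintegral => v _; rewrite mulrCA.
Qed.

Lemma L1 : L (fun _ => 1) = 1.
Proof.
rewrite /L /Rintegral.
under eq_integral do rewrite mulr1.
by rewrite g1.
Qed.

Lemma Lge0 h : (forall v, 0 <= h v) -> 0 <= L h.
Proof. by move=> h0; apply: Rintegral_ge0 => v _; rewrite mulr_ge0. Qed.

Lemma Lext h1 h2 : (forall v, h1 v = h2 v) -> L h1 = L h2.
Proof. by move=> e; congr L; apply: funext. Qed.


Definition sc2 (xi : R3 R) : R3 R := ((2 * c1 xi, 2 * c2 xi), 2 * c3 xi).

Lemma dot_sc2 xi v : dot3 (sc2 xi) v = dot3 xi v + dot3 xi v.
Proof. rewrite /dot3 /sc2 /c1 /c2 /c3 /=; ring. Qed.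

Lemma FA x : Fabs g x ^+ 2 =
  L (fun v => cos (dot3 x v)) ^+ 2 + L (fun v => sin (dot3 x v)) ^+ 2.
Proof. by rewrite /Fabs sqr_sqrtr ?addr_ge0 ?sqr_ge0 // /FIm sqrrN. Qed.

Lemma doubling xi :
  1 - Fabs g (sc2 xi) ^+ 2 <= 4 * (1 - Fabs g xi ^+ 2).
Proof.
rewrite !FA.
set A := L (fun v => cos (dot3 xi v)); set B := L (fun v => sin (dot3 xi v)).
set A2 := L (fun v => cos (dot3 (sc2 xi) v)).
set B2 := L (fun v => sin (dot3 (sc2 xi) v)).
have hA2 := sqr_ge0 A2; have hB2 := sqr_ge0 B2.
have [r20|r2pos] : A ^+ 2 + B ^+ 2 = 0 \/ 0 < A ^+ 2 + B ^+ 2.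
  by have := addr_ge0 (sqr_ge0 A) (sqr_ge0 B); rewrite le_eqVlt => /orP[/eqP <-|->]; [left|right].
  by rewrite r20; lra.
set r := Num.sqrt (A ^+ 2 + B ^+ 2).
have r0 : 0 < r by rewrite sqrtr_gt0.
have rr : r ^+ 2 = A ^+ 2 + B ^+ 2 by rewrite sqr_sqrtr // ltW.
have rn0 : r != 0 by rewrite gt_eqF.
set al := A / r; set be := B / r.
have ab1 : al ^+ 2 + be ^+ 2 = 1.
  by rewrite /al /be !expr_div_n -mulrDl -rr divff // sqrf_eq0.
set C := fun v => cos (dot3 xi v); set S := fun v => sin (dot3 xi v).
have bC : bdd C by exact: bdd_cos.
have bS : bdd S by exact: bdd_sin.
set c := fun v => al * C v + be * S v.
have bc : bdd c by apply: bddD; apply: bddM => //; exact: bddC.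
have bcc : bdd (fun v => c v * c v) by exact: bddM.
have b1 : bdd (fun _ => 1) by exact: bddC.
have Lc : L c = al * A + be * B by rewrite /c LD ?LZ //; apply: bddM => //; exact: bddC.
have m_r : al * A + be * B = r.
  rewrite /al /be; apply: (mulIf rn0); rewrite mulrDl -!mulrA !(mulrC _ r) !mulrA.
  by rewrite !divfK // -!expr2 rr.
set P := L (fun v => c v * c v).
have Pm : 0 <= P - r ^+ 2.
  have := Lge0 (fun v => (c v - r) ^+ 2) (fun v => sqr_ge0 _).
  rewrite (@Lext (fun v => (c v - r) ^+ 2) (fun v => c v * c v + ((-2 * r) * c v + r ^+ 2 * 1))); last first.
    by move=> v; ring.
  rewrite LD //; last by apply: bddD; apply: bddM => //; exact: bddC.
  rewrite LD //; try (apply: bddM => //; exact: bddC).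
  rewrite !LZ // L1 Lc m_r -/P.
  by move=> h; lra.
have P0 : 0 <= P by apply: Lge0 => v; rewrite -expr2 sqr_ge0.
have cc1 v : c v * c v <= 1.
  have e : (c v * c v) + (al * S v - be * C v) ^+ 2 =
           (al ^+ 2 + be ^+ 2) * (C v ^+ 2 + S v ^+ 2) by rewrite /c; ring.
  have e2 : C v ^+ 2 + S v ^+ 2 = 1 := cos2Dsin2 _.
  rewrite ab1 e2 mul1r in e.
  have := sqr_ge0 (al * S v - be * C v); lra.
have P1 : P <= 1.
  have := Lge0 (fun v => 1 + (-1) * (c v * c v)) (fun v => ltac:(have := cc1 v; lra)).
  by rewrite LD ?LZ // ?L1 -/P; [lra | apply: bddM => //; exact: bddC].
set ga := al ^+ 2 - be ^+ 2; set de := 2 * al * be.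
have comb : ga * A2 + de * B2 = 2 * P - 1.
  have e : L (fun v => ga * cos (dot3 (sc2 xi) v) + de * sin (dot3 (sc2 xi) v)) =
           L (fun v => 2 * (c v * c v) + (-1) * 1).
    apply: Lext => v; rewrite dot_sc2 cosD sinD /c /C /S.
    set co := cos (dot3 xi v); set si := sin (dot3 xi v).
    have e1 : co ^+ 2 + si ^+ 2 = 1 by exact: cos2Dsin2.
    have e2 : (al ^+ 2 + be ^+ 2) * (co ^+ 2 + si ^+ 2) = 1 by rewrite ab1 e1 mul1r.
    have -> : ga * (co * co - si * si) + de * (si * co + co * si) =
      2 * ((al * co + be * si) * (al * co + be * si)) + (-1) * 1
      + (1 - (al ^+ 2 + be ^+ 2) * (co ^+ 2 + si ^+ 2)) by rewrite /ga /de; ring.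
    by rewrite e2 subrr addr0.
  move: e; rewrite LD; last 2 first.
  - by apply: bddM; [exact: bddC | exact: bdd_cos].
  - by apply: bddM; [exact: bddC | exact: bdd_sin].
  rewrite LD; last 2 first.
  - by apply: bddM; [exact: bddC | exact: bddM].
  - by apply: bddM; exact: bddC.
  by rewrite !LZ ?L1 //; [rewrite -/A2 -/B2 -/P => ->; ring | exact: bdd_sin | exact: bdd_cos].
have gd : ga ^+ 2 + de ^+ 2 = 1.
  have -> : ga ^+ 2 + de ^+ 2 = (al ^+ 2 + be ^+ 2) ^+ 2 by rewrite /ga /de; ring.
  by rewrite ab1 expr1n.
have CS : (ga * A2 + de * B2) ^+ 2 <= A2 ^+ 2 + B2 ^+ 2.
  have e : (ga * A2 + de * B2) ^+ 2 + (ga * B2 - de * A2) ^+ 2 =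
           (ga ^+ 2 + de ^+ 2) * (A2 ^+ 2 + B2 ^+ 2) by ring.
  rewrite gd mul1r in e; have := sqr_ge0 (ga * B2 - de * A2); lra.
rewrite comb in CS; rewrite -rr.
have := sqr_ge0 (P - 1); nra.
Qed.

End Aux.
Arguments sc2 {R}.

Lemma norm_sc2 {R : realType} (xi : R3 R) : norm3 (sc2 xi) = 2 * norm3 xi.
Proof.
rewrite /norm3 (_ : sqnorm3 (sc2 xi) = 2 ^+ 2 * sqnorm3 xi); last first.
  by rewrite /sqnorm3 /dot3 /sc2 /c1 /c2 /c3 /=; ring.
by rewrite sqrtrM ?sqr_ge0 // sqrtr_sqr ger0_norm.
Qed.

Lemma expR_lnle {R : realType} (y x : R) : 0 < y -> ln y <= x -> y * expR (- x) <= 1.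
Proof.
move=> y0 lx; have : expR (- x) <= expR (- ln y) by rewrite ler_expR lerN2.
rewrite [expR (- ln y)]expRN lnK ?posrE // => h.
by rewrite -(divff (negbT (gt_eqF y0))) ler_pM2l.
Qed.

Lemma sqnorm3_ge0 {R : realType} (xi : R3 R) : 0 <= sqnorm3 xi.
Proof. by rewrite /sqnorm3 /dot3 !addr_ge0 // -expr2 sqr_ge0. Qed.

Lemma norm3_ge0 {R : realType} (xi : R3 R) : 0 <= norm3 xi.
Proof. exact: sqrtr_ge0. Qed.

Lemma norm3_sq {R : realType} (xi : R3 R) : norm3 xi ^+ 2 = sqnorm3 xi.
Proof. by rewrite /norm3 sqr_sqrtr // sqnorm3_ge0. Qed.

Lemma norm3_eq0 {R : realType} (xi : R3 R) : norm3 xi = 0 -> sc2 xi = xi.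
Proof.
move=> h; have : sqnorm3 xi = 0 by rewrite -norm3_sq h expr2 mulr0.
case: xi {h} => [[a b] c]; rewrite /sqnorm3 /dot3 /c1 /c2 /c3 /sc2 /= => e.
have a0 : a = 0 by apply/eqP; rewrite -sqrf_eq0; apply/eqP;
  have := sqr_ge0 a; have := sqr_ge0 b; have := sqr_ge0 c; rewrite !expr2; lra.
have b0 : b = 0 by apply/eqP; rewrite -sqrf_eq0; apply/eqP;
  have := sqr_ge0 a; have := sqr_ge0 b; have := sqr_ge0 c; rewrite !expr2; lra.
have c0 : c = 0 by apply/eqP; rewrite -sqrf_eq0; apply/eqP;
  have := sqr_ge0 a; have := sqr_ge0 b; have := sqr_ge0 c; rewrite !expr2; lra.
by rewrite a0 b0 c0 mulr0.
Qed.

Theorem proposition10 (R : realType) (g : R3 R -> R) (K1 K2 : R) (phi : R -> R) :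
  measurable_fun setT g ->
  (forall v, 0 <= g v) ->
  (\int[@leb3 R]_v (g v)%:E = 1%:E)%E ->
  (\int[@leb3 R]_v (g v * c1 v)%:E = 0%:E)%E ->
  (\int[@leb3 R]_v (g v * c2 v)%:E = 0%:E)%E ->
  (\int[@leb3 R]_v (g v * c3 v)%:E = 0%:E)%E ->
  (\int[@leb3 R]_v (g v * sqnorm3 v)%:E = 3%:E)%E ->
  1 <= K1 -> 0 < K2 ->
  (forall t, 0 <= t -> 0 <= phi t) ->
  phi x @[x --> +oo] --> +oo ->
  (forall xi, Fabs g xi <= K1 * expR (- (K2 * phi (norm3 xi)))) ->
  exists eta : R, 0 < eta /\
    forall R0 : R, eta < R0 ->
      exists K : R, 0 < K /\
        (forall xi, norm3 xi < R0 -> Fabs g xi <= expR (- (K * norm3 xi ^+ 2))) /\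
        (forall xi, R0 <= norm3 xi -> Fabs g xi <= expR (- (K * phi (norm3 xi)))).
Proof.
move=> mg g0 g1 _ _ _ _ K11 K20 phi0 hphi hF.
have D := @doubling R g mg g0 g1.
have F0 xi : 0 <= Fabs g xi by exact: sqrtr_ge0.
have K1p : 0 < K1 by apply: lt_le_trans K11.
set M := 2 * ln (2 * K1) / K2.
have l2K : 0 <= ln (2 * K1) by apply: ln_ge0; lra.
have [T0 [_ HT0]] := (cvgryPge _ ).1 hphi M.
set T := Num.max T0 0 + 1.
have mx0 : 0 <= Num.max T0 0 by rewrite le_max lexx orbT.
have mx1 : T0 <= Num.max T0 0 by rewrite le_max lexx.
have T0p : 0 < T by rewrite /T; lra.
have phiT t : T <= t -> M <= phi t.
  by move=> h; apply: HT0; move: h; rewrite /T; lra.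
have KM : K2 * M = 2 * ln (2 * K1) by rewrite /M; field; rewrite gt_eqF.
have Fhalf xi : T <= norm3 xi -> Fabs g xi <= 2^-1.
  move=> h; apply: le_trans (hF xi) _.
  have hM := phiT _ h.
  have : ln (2 * K1) <= K2 * phi (norm3 xi).
    by have := ler_wpM2l (ltW K20) hM; rewrite KM; lra.
  have h2K : 0 < 2 * K1 by lra.
  move=> hl; have := @expR_lnle R (2 * K1) _ h2K hl.
  have := expR_ge0 (- (K2 * phi (norm3 xi))); lra.
set c := 3 / (16 * T ^+ 2).
have cp : 0 < c by rewrite /c divr_gt0 // mulr_gt0 // exprn_gt0.
have c4 : c * (4 * T ^+ 2) = 3 / 4 by rewrite /c; field; rewrite gt_eqF.
have base xi : norm3 xi < 2 * T -> T <= norm3 xi ->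
    c * norm3 xi ^+ 2 <= 1 - Fabs g xi ^+ 2.
  move=> h1 h2; have := Fhalf xi h2; have := F0 xi.
  have s0 := norm3_ge0 xi.
  have : norm3 xi ^+ 2 <= 4 * T ^+ 2 by nra.
  move=> hs; have := ler_wpM2l (ltW cp) hs; rewrite c4; nra.
have E0 n : forall xi, norm3 xi < 2 * T -> T <= 2 ^+ n * norm3 xi ->
    c * norm3 xi ^+ 2 <= 1 - Fabs g xi ^+ 2.
  elim: n => [|n IH] xi h1 h2.
    by apply: base => //; rewrite expr0 mul1r in h2.
  case: (lerP T (norm3 xi)) => hT; first exact: base.
  have := IH (sc2 xi); rewrite norm_sc2 => /(_ ltac:(lra)).
  rewrite exprS -mulrA mulrCA in h2.
  move=> /(_ h2).
  have := D xi; nra.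
have Fle1 xi : norm3 xi = 0 -> Fabs g xi <= 1.
  move=> h; have := D xi; rewrite norm3_eq0 // => h'.
  have := F0 xi; nra.
have Esmall xi : 0 < norm3 xi -> norm3 xi < T ->
    c * norm3 xi ^+ 2 <= 1 - Fabs g xi ^+ 2.
  move=> s0 sT.
  have bP := archi_boundP (ltW (divr_gt0 T0p s0)).
  set n := Num.Def.archi_bound _ in bP.
  apply: (E0 n); first lra.
  have : n%:R <= 2 ^+ n :> R.
    by rewrite -natrX ler_nat ltnW // ltn_expl.
  move=> hn; have : T / norm3 xi <= 2 ^+ n by lra.
  by rewrite ler_pdivrMr.
exists T; split => // R0 hR0.
set K := Num.min (Num.min (c / 2) (ln 2 / R0 ^+ 2)) (K2 / 2).
have R0p : 0 < R0 by lra.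
have ln2 : 0 < ln (2 : R) by apply: ln_gt0; lra.
have Kc : K <= c / 2 by rewrite /K !ge_min lexx.
have Kl : K <= ln 2 / R0 ^+ 2 by rewrite /K !ge_min lexx orbT.
have KK : K <= K2 / 2 by rewrite /K !ge_min lexx orbT.
have Kp : 0 < K.
  rewrite /K !lt_min divr_gt0 //= ?divr_gt0 //= ?exprn_gt0 //.
exists K; split => //; split.
  move=> xi hxi; have s0 := norm3_ge0 xi.
  have [e0|spos] : norm3 xi = 0 \/ 0 < norm3 xi.
    by move: s0; rewrite le_eqVlt => /orP[/eqP <-|->]; [left|right].
    by rewrite e0 expr2 mulr0 mulr0 oppr0 expR0; exact: Fle1.
  case: (lerP T (norm3 xi)) => hT.
    apply: le_trans (Fhalf xi hT) _.
    have : K * norm3 xi ^+ 2 <= ln 2.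
      have hs : norm3 xi ^+ 2 <= R0 ^+ 2 by nra.
      have := ler_wpM2l (ltW Kp) hs.
      have := ler_wpM2r (sqr_ge0 R0) Kl.
      rewrite divfK ?gt_eqF ?exprn_gt0 //; lra.
    move=> h.
    have : expR (- ln 2) <= expR (- (K * norm3 xi ^+ 2)) by rewrite ler_expR; lra.
    by rewrite expRN lnK // posrE.
  have hc := Esmall xi spos hT.
  set s := norm3 xi in hc *.
  have e1 := expR_ge1Dx (- (c * s ^+ 2)).
  have e2 : expR (- (c * s ^+ 2)) = expR (- (c / 2 * s ^+ 2)) ^+ 2.
    by rewrite [RHS]expr2 -expRD; congr expR; field.
  have e3 : expR (- (c / 2 * s ^+ 2)) <= expR (- (K * s ^+ 2)).
    by rewrite ler_expR lerN2; apply: ler_wpM2r => //; exact: sqr_ge0.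
  have e4 := expR_gt0 (- (c / 2 * s ^+ 2)).
  have := F0 xi; rewrite e2 in e1; nra.
move=> xi hxi.
have s0 := norm3_ge0 xi.
set s := norm3 xi in hxi s0 *.
have hM : M <= phi s by apply: phiT; lra.
have p0 := phi0 _ s0.
apply: le_trans (hF xi) _.
rewrite -/s.
have e2 : expR (- (K2 * phi s)) = expR (- (K2 / 2 * phi s)) * expR (- (K2 / 2 * phi s)).
  by rewrite -expRD; congr expR; field.
have e3 : K1 * expR (- (K2 / 2 * phi s)) <= 1.
  apply: expR_lnle => //.
  have : ln K1 <= ln (2 * K1) by rewrite ler_ln ?posrE //; lra.
  have := ler_wpM2l (ltW K20) hM; rewrite KM; lra.
have e4 : expR (- (K2 / 2 * phi s)) <= expR (- (K * phi s)).
  by rewrite ler_expR lerN2; apply: ler_wpM2r.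
have e5 := expR_gt0 (- (K2 / 2 * phi s)).
rewrite e2; nra.
Qed.
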